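(* Consider the type with a single binary operation $\cdot$, let $\mathcal{LZ}$ be the variety of left-zero semigroups (defined by $x\cdot y=x$), and let $X=\{x,y\}$ be a two-element set. Then the free $\mathcal{LZ}^p$-algebra over $X$ is not a semigroup; specifically, $x\cdot(y\cdot x)\neq(x\cdot y)\cdot x$ in it.
   Context: In the type with one binary operation, $T_m$ is the set of terms in $x_1,\dots,x_m$ in which all $m$ variables occur. Prolongation: for an identity $\sigma$ of the form $u(y_1,\dots,y_n)=v(y_1,\dots,y_n)$ and $m\ge1$, $\sigma^p_m$ is the set of identities $u(r_1,\dots,r_n)=v(r_1,\dots,r_n)$ obtained by substituting $r_i(x_1,\dots,x_m)$ for $y_i$, with $r_i$ ranging over $T_m$; $\sigma^p=\bigcup_m\sigma^p_m$; $\Sigma^p=\bigcup_{\sigma\in\Sigma}\sigma^p$. For a variety $\mathcal{V}$, $\mathcal{V}^p$ is the variety defined by $\mathrm{Id}(\mathcal{V})^p$, where $\mathrm{Id}(\mathcal{V})$ is the set of all identities holding in $\mathcal{V}$. *)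

(* Defs.v *)
From Stdlib Require Import Arith.

Inductive term : Type :=
| Var : nat -> term
| Op : term -> term -> term.

Record algebra : Type := Algebra { carrier :> Type; op : carrier -> carrier -> carrier }.

Fixpoint eval (A : algebra) (e : nat -> A) (t : term) : A :=
  match t with
  | Var n => e n
  | Op t1 t2 => op A (eval A e t1) (eval A e t2)
  end.

Definition identity := (term * term)%type.

Definition satisfies (A : algebra) (s : identity) : Prop :=
  forall e : nat -> A, eval A e (fst s) = eval A e (snd s).

Definition models (A : algebra) (Sigma : identity -> Prop) : Prop :=
  forall s, Sigma s -> satisfies A s.

(* Id(V) for V the variety defined by Sigma: all identities holding in V. *)
Definition Id_of (Sigma : identity -> Prop) (s : identity) : Prop :=
  forall A : algebra, models A Sigma -> satisfies A s.

Fixpoint occurs (i : nat) (t : term) : Prop :=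
  match t with
  | Var n => n = i
  | Op t1 t2 => occurs i t1 \/ occurs i t2
  end.

Definition in_T (m : nat) (t : term) : Prop :=
  (forall i, occurs i t -> i < m) /\ (forall i, i < m -> occurs i t).

Fixpoint subst (s : nat -> term) (t : term) : term :=
  match t with
  | Var n => s n
  | Op t1 t2 => Op (subst s t1) (subst s t2)
  end.

Definition prolong_m (m : nat) (sigma tau : identity) : Prop :=
  exists s : nat -> term,
    (forall i, occurs i (fst sigma) \/ occurs i (snd sigma) -> in_T m (s i)) /\
    tau = (subst s (fst sigma), subst s (snd sigma)).

Definition prolong (Sigma : identity -> Prop) (tau : identity) : Prop :=
  exists sigma m, Sigma sigma /\ 1 <= m /\ prolong_m m sigma tau.

(* V^p is the variety defined by Id(V)^p. *)
Definition prolong_variety (Sigma : identity -> Prop) : identity -> Prop :=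
  prolong (Id_of Sigma).

Definition LZ_ax (s : identity) : Prop := s = (Op (Var 0) (Var 1), Var 0).

Definition LZp_ax : identity -> Prop := prolong_variety LZ_ax.

(* The free algebra of the variety defined by Sigma over X = {x, y}
   (x = Var 0, y = Var 1) is T(X) modulo the relation below:
   two terms over X are equal in it iff the identity holds in the variety. *)
Definition over_X (t : term) : Prop := forall i, occurs i t -> i < 2.

Definition free_eq (Sigma : identity -> Prop) (t1 t2 : term) : Prop :=
  Id_of Sigma (t1, t2).

Definition vx : term := Var 0.
Definition vy : term := Var 1.

(* Main.v *)
Require Import Defs.
From Stdlib Require Import Arith.
From Stdlib Require Import Classical ClassicalEpsilon Lia.

Definition same (a b : term) : Prop := forall i, occurs i a <-> occurs i b.

Definition mop (a b : term) : term :=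
  if excluded_middle_informative (same a b) then a else Op a b.

Definition M : algebra := Algebra term mop.

Fixpoint lm (t : term) : nat := match t with Var n => n | Op a _ => lm a end.

Lemma occ_mop a b i : occurs i (mop a b) <-> occurs i a \/ occurs i b.
Proof.
  unfold mop; destruct (excluded_middle_informative (same a b)) as [h|h]; simpl.
  - specialize (h i); tauto.
  - tauto.
Qed.

Lemma occ_eval (e : nat -> term) t i :
  occurs i (eval M e t) <-> exists j, occurs j t /\ occurs i (e j).
Proof.
  induction t as [n|a IHa b IHb]; simpl.
  - split; [intros h; exists n; auto | intros [j [-> h]]; auto].
  - change (occurs i (mop (eval M e a) (eval M e b)) <->
            exists j, (occurs j a \/ occurs j b) /\ occurs i (e j)).
    rewrite occ_mop, IHa, IHb. split.
    + intros [[j [h1 h2]]|[j [h1 h2]]]; exists j; auto.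
    + intros [j [[h1|h1] h2]]; [left|right]; exists j; auto.
Qed.

Lemma eval_same (e : nat -> term) s t :
  (forall j, occurs j t -> same (e j) s) ->
  same (eval M e t) s /\ eval M e t = e (lm t).
Proof.
  induction t as [n|a IHa b IHb]; simpl; intros H.
  - split; auto.
  - destruct IHa as [Ha Ea]; [intros; apply H; auto|].
    destruct IHb as [Hb Eb]; [intros; apply H; auto|].
    change (same (mop (eval M e a) (eval M e b)) s /\ mop (eval M e a) (eval M e b) = e (lm a)).
    unfold mop; destruct (excluded_middle_informative (same (eval M e a) (eval M e b))) as [h|h].
    + auto.
    + exfalso; apply h; intros i; rewrite (Ha i), (Hb i); tauto.
Qed.

Lemma lm_occ t : occurs (lm t) t.
Proof. induction t; simpl; auto. Qed.

Definition LZnat : algebra := Algebra nat (fun a _ => a).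

Lemma eval_LZnat t : eval LZnat (fun n => n) t = lm t.
Proof. induction t; simpl; auto. Qed.

Lemma id_lm u v : Id_of LZ_ax (u, v) -> lm u = lm v.
Proof.
  intros H. assert (Hm : models LZnat LZ_ax).
  { intros s Hs e; unfold LZ_ax in Hs; subst s; reflexivity. }
  specialize (H LZnat Hm (fun n => n)); simpl in H.
  rewrite !eval_LZnat in H; exact H.
Qed.

Lemma eval_subst (A : algebra) e s t :
  eval A e (subst s t) = eval A (fun i => eval A e (s i)) t.
Proof. induction t; simpl; congruence. Qed.

Lemma M_models : models M LZp_ax.
Proof.
  intros tau [[u v] [m [Hid [Hm [s [Hs ->]]]]]] e; simpl in *.
  rewrite !eval_subst.
  set (f := fun i => eval M e (s i)).
  assert (Hsame : forall j k, occurs j u \/ occurs j v -> occurs k u \/ occurs k v ->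
                  same (f j) (f k)).
  { intros j k hj hk i. unfold f. rewrite !occ_eval.
    destruct (Hs j hj) as [A1 A2]; destruct (Hs k hk) as [B1 B2].
    split; intros [l [h1 h2]]; exists l; split; auto. }
  set (r := f (lm u)).
  destruct (eval_same f r u) as [_ Eu].
  { intros j hj; apply Hsame; auto; left; apply lm_occ. }
  destruct (eval_same f r v) as [_ Ev].
  { intros j hj; apply Hsame; auto; left; apply lm_occ. }
  rewrite Eu, Ev, (id_lm _ _ Hid); reflexivity.
Qed.

Lemma not_eq : ~ free_eq LZp_ax (Op vx (Op vy vx)) (Op (Op vx vy) vx).
Proof.
  intros H. specialize (H M M_models Var). simpl in H.
  change (mop (Var 0) (mop (Var 1) (Var 0)) = mop (mop (Var 0) (Var 1)) (Var 0)) in H.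
  assert (n01 : ~ same (Var 1) (Var 0)) by (intros h; discriminate (proj1 (h 1) eq_refl)).
  assert (n10 : ~ same (Var 0) (Var 1)) by (intros h; discriminate (proj1 (h 0) eq_refl)).
  unfold mop in H.
  repeat destruct excluded_middle_informative; try contradiction; try discriminate.
Qed.

Theorem corollary4p12 :
  (~ (forall a b c : term, over_X a -> over_X b -> over_X c ->
        free_eq LZp_ax (Op a (Op b c)) (Op (Op a b) c))) /\
  ~ free_eq LZp_ax (Op vx (Op vy vx)) (Op (Op vx vy) vx).
Proof.
  split; [|exact not_eq].
  intros H; apply not_eq; apply H; unfold over_X, vx, vy; simpl; intros; lia.
Qed.
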